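(* Let $\eta=3/\sqrt{8\pi e}$. (a) For $n\in\mathbb{N}$ let $h=2/\sqrt n$ and $\mathcal X=\{-\sqrt n+\frac{2k}{\sqrt n}:k=0,1,\dots,n\}$. For a $2\times2$ positive definite matrix $B$ and $\mathbf x=(x_1,x_2)^{\top}$ define $$I_d=\int_{\mathbb{R}}h\sum_{x_1\in\mathcal X}\exp\{-\mathbf x^{\top}B\mathbf x/2\}\,dx_2,\qquad I_c=\int_{\mathbb{R}^2}\exp\{-\mathbf x^{\top}B\mathbf x/2\}\,d\mathbf x.$$ Then $I_d\le(1+\frac{\eta B_{11}}{n})I_c$. (b) For $n,n'\in\mathbb{N}$ let additionally $h'=2/\sqrt{n'}$ and $\mathcal X'=\{-\sqrt{n'}+\frac{2k}{\sqrt{n'}}:k=0,\dots,n'\}$. For a $3\times3$ positive definite $B$ and $\mathbf x=(x_1,x_2,x_3)^{\top}$ define $$I_d=\int_{\mathbb{R}}hh'\sum_{x_1\in\mathcal X}\sum_{x_2\in\mathcal X'}\exp\{-\mathbf x^{\top}B\mathbf x/2\}\,dx_3,\qquad I_c=\int_{\mathbb{R}^3}\exp\{-\mathbf x^{\top}B\mathbf x/2\}\,d\mathbf x.$$ Then $I_d\le(1+\frac{\eta B_{11}}{n})(1+\frac{\eta B_{22}}{n'})I_c$.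
   Context: $B_{ij}$ denotes the $(i,j)$ entry of $B$. *)

(* Defs.v *)
From Stdlib Require Import Reals Lra.
Open Scope R_scope.

Definition eta : R := 3 / sqrt (8 * PI * exp 1).

Definition is_integral_R (f : R -> R) (l : R) : Prop :=
  (forall a b : R, inhabited (Riemann_integrable f a b)) /\
  forall eps : R, 0 < eps -> exists M : R,
    forall (a b : R) (pr : Riemann_integrable f a b),
      a <= - M -> M <= b -> Rabs (RiemannInt pr - l) < eps.

Definition grid (n k : nat) : R := - sqrt (INR n) + 2 * INR k / sqrt (INR n).
Definition mesh (n : nat) : R := 2 / sqrt (INR n).

(* Matrices are given by their entries B i j, indices 1-based. *)
Definition qform2 (B : nat -> nat -> R) (x1 x2 : R) : R :=
  x1 * B 1%nat 1%nat * x1 + x1 * B 1%nat 2%nat * x2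
  + x2 * B 2%nat 1%nat * x1 + x2 * B 2%nat 2%nat * x2.

Definition posdef2 (B : nat -> nat -> R) : Prop :=
  B 1%nat 2%nat = B 2%nat 1%nat /\
  forall x1 x2 : R, (x1 <> 0 \/ x2 <> 0) -> 0 < qform2 B x1 x2.

Definition qform3 (B : nat -> nat -> R) (x1 x2 x3 : R) : R :=
  let x := fun i : nat => match i with 1%nat => x1 | 2%nat => x2 | _ => x3 end in
  sum_f_R0 (fun i => sum_f_R0 (fun j =>
      x (S i) * B (S i) (S j) * x (S j)) 2) 2.

Definition posdef3 (B : nat -> nat -> R) : Prop :=
  (forall i j : nat, (1 <= i <= 3)%nat -> (1 <= j <= 3)%nat -> B i j = B j i) /\
  forall x1 x2 x3 : R, (x1 <> 0 \/ x2 <> 0 \/ x3 <> 0) -> 0 < qform3 B x1 x2 x3.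

Definition gauss2 (B : nat -> nat -> R) (x1 x2 : R) : R := exp (- qform2 B x1 x2 / 2).
Definition gauss3 (B : nat -> nat -> R) (x1 x2 x3 : R) : R :=
  exp (- qform3 B x1 x2 x3 / 2).

(* Main.v *)
Require Import Defs.
From Stdlib Require Import Reals Lra Psatz FunctionalExtensionality.
From Coquelicot Require Import Coquelicot.
Import Defs.
Open Scope R_scope.

Lemma int_ex f l a b : is_integral_R f l -> ex_RInt f a b.
Proof. intros [H _]. destruct (H a b) as [pr]. now apply ex_RInt_Reals_1. Qed.

Lemma int_bound f l al be : (forall x, 0 <= f x) -> is_integral_R f l ->
  al <= be -> RInt f al be <= l.
Proof.
  intros Hp Hf Hab. destruct (Rle_lt_dec (RInt f al be) l) as [h|h]; [exact h|].
  exfalso. destruct Hf as [Hi Hl].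
  destruct (Hl (RInt f al be - l)) as [M HM]; [lra|].
  set (A := Rmin al (-M)). set (B := Rmax be M).
  destruct (Hi A B) as [pr].
  assert (HA : A <= -M) by (unfold A; apply Rmin_r).
  assert (HB : M <= B) by (unfold B; apply Rmax_r).
  specialize (HM A B pr HA HB). rewrite <- RInt_Reals in HM.
  assert (E : forall u v, ex_RInt f u v) by (intros u v; destruct (Hi u v) as [p]; now apply ex_RInt_Reals_1).
  assert (A <= al) by (unfold A; apply Rmin_l).
  assert (be <= B) by (unfold B; apply Rmax_l).
  rewrite <- (RInt_Chasles f A al B) in HM by auto.
  rewrite <- (RInt_Chasles f al be B) in HM by auto.
  assert (0 <= RInt f A al) by (apply RInt_ge_0; auto).
  assert (0 <= RInt f be B) by (apply RInt_ge_0; auto).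
  unfold plus in HM; simpl in HM.
  apply Rabs_def2 in HM. lra.
Qed.

Lemma int_le f g l1 l2 : (forall x, f x <= g x) -> is_integral_R f l1 ->
  is_integral_R g l2 -> l1 <= l2.
Proof.
  intros Hfg [Fi Fl] [Gi Gl]. destruct (Rle_lt_dec l1 l2) as [h|h]; [exact h|].
  exfalso.
  destruct (Fl ((l1 - l2)/2)) as [M1 H1]; [lra|].
  destruct (Gl ((l1 - l2)/2)) as [M2 H2]; [lra|].
  set (M := Rmax (Rmax M1 M2) 0).
  assert (M1 <= M /\ M2 <= M /\ 0 <= M) as [? [? ?]].
  { unfold M. repeat split; [eapply Rle_trans;[apply Rmax_l|apply Rmax_l]|
      eapply Rle_trans;[apply Rmax_r|apply Rmax_l]|apply Rmax_r]. }
  destruct (Fi (-M) M) as [pf]. destruct (Gi (-M) M) as [pg].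
  specialize (H1 (-M) M pf ltac:(lra) ltac:(lra)).
  specialize (H2 (-M) M pg ltac:(lra) ltac:(lra)).
  rewrite <- RInt_Reals in H1, H2.
  assert (RInt f (-M) M <= RInt g (-M) M).
  { apply RInt_le; [lra| now apply ex_RInt_Reals_1 | now apply ex_RInt_Reals_1 |].
    intros; apply Hfg. }
  apply Rabs_def2 in H1. apply Rabs_def2 in H2. lra.
Qed.

Lemma int_scal f l c : is_integral_R f l -> is_integral_R (fun x => c * f x) (c * l).
Proof.
  intros [Fi Fl]. split.
  - intros a b. destruct (Fi a b) as [p]. constructor. apply ex_RInt_Reals_0.
    apply (ex_RInt_scal f a b c). now apply ex_RInt_Reals_1.
  - intros eps He. destruct (Fl (eps / (Rabs c + 1))) as [M HM].
    { apply Rdiv_lt_0_compat; [lra|]. pose proof (Rabs_pos c); lra. }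
    exists M. intros a b pr Ha Hb. destruct (Fi a b) as [p].
    specialize (HM a b p Ha Hb). rewrite <- RInt_Reals in HM |- *.
    assert (Hs : RInt (fun x => c * f x) a b = c * RInt f a b)
      by (apply (RInt_scal f a b c); now apply ex_RInt_Reals_1).
    rewrite Hs.
    replace (c * RInt f a b - c * l) with (c * (RInt f a b - l)) by ring.
    rewrite Rabs_mult.
    assert (Rabs c * Rabs (RInt f a b - l) <= Rabs c * (eps / (Rabs c + 1))).
    { apply Rmult_le_compat_l; [apply Rabs_pos|lra]. }
    assert (Rabs c * (eps / (Rabs c + 1)) < eps).
    { pose proof (Rabs_pos c). apply (Rmult_lt_reg_r (Rabs c + 1)); [lra|].
      field_simplify; [nra|lra]. }
    lra.
Qed.

Lemma int_shift f l c : is_integral_R f l -> is_integral_R (fun x => f (x + c)) l.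
Proof.
  intros [Fi Fl].
  assert (E : forall a b, ex_RInt (fun x => f (x + c)) a b /\
              RInt (fun x => f (x + c)) a b = RInt f (a + c) (b + c)).
  { intros a b. destruct (Fi (1*a+c) (1*b+c)) as [p].
    apply ex_RInt_Reals_1 in p.
    pose proof (ex_RInt_comp_lin f 1 c a b p) as h1.
    pose proof (RInt_comp_lin f 1 c a b p) as h2.
    split.
    - eapply ex_RInt_ext; [|exact h1]. intros x _. simpl.
      change (1 * f (1 * x + c) = f (x + c)). rewrite Rmult_1_l. f_equal; ring.
    - rewrite !Rmult_1_l in h2. rewrite <- h2. apply RInt_ext. intros x _.
      change (f (x + c) = 1 * f (1 * x + c)). rewrite !Rmult_1_l. reflexivity. }
  split.
  - intros a b. constructor. apply ex_RInt_Reals_0. apply E.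
  - intros eps He. destruct (Fl eps He) as [M HM]. exists (M + Rabs c).
    intros a b pr Ha Hb. rewrite <- RInt_Reals. rewrite (proj2 (E a b)).
    destruct (Fi (a + c) (b + c)) as [p]. rewrite (RInt_Reals _ _ _ p).
    apply HM; pose proof (Rabs_pos c); pose proof (Rle_abs c); pose proof (Rle_abs (-c));
    rewrite Rabs_Ropp in *; lra.
Qed.


Definition p (t : R) : R := t * exp (- (t * t) / 2).
Definition q (t : R) : R := p (Rmax (-1) (Rmin t 1)).

Lemma exp_split t u : exp (- (t * t) / 2) = exp (- (u * u) / 2) * exp ((u*u - t*t)/2).
Proof. rewrite <- exp_plus. f_equal. field. Qed.

Lemma p_right t u : 1 <= t -> t <= u -> p u <= p t.
Proof.
  intros H1 H2. unfold p. rewrite (exp_split t u).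
  set (E := exp (- (u * u) / 2)). set (d := (u * u - t * t) / 2).
  assert (0 < E) by apply exp_pos.
  pose proof (exp_ineq1_le d).
  assert (u <= t * (1 + d)).
  { unfold d. assert (0 <= t * (u + t) - 2) by nra. assert (0 <= (u - t) * (t * (u + t) - 2)) by (apply Rmult_le_pos; lra). nra. }
  assert (t * (1 + d) <= t * exp d) by nra.
  nra.
Qed.

Lemma p_mid t u : 0 <= t -> t <= u -> u <= 1 -> p t <= p u.
Proof.
  intros H0 H1 H2. unfold p. rewrite (exp_split t u).
  set (E := exp (- (u * u) / 2)). set (d := (u * u - t * t) / 2).
  assert (0 < E) by apply exp_pos.
  pose proof (exp_ineq1_le (-d)).
  assert (exp d * exp (-d) = 1) by (rewrite <- exp_plus; replace (d + - d) with 0 by ring; apply exp_0).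
  assert (0 < exp d) by apply exp_pos.
  assert (exp d * (1 - d) <= 1) by nra.
  assert (t <= u * (1 - d)).
  { unfold d. assert (0 <= 2 - u * (u + t)) by nra. assert (0 <= (u - t) * (2 - u * (u + t))) by (apply Rmult_le_pos; lra). nra. }
  assert (t * exp d <= u) by nra.
  nra.
Qed.

Lemma p_odd t : p (- t) = - p t.
Proof. unfold p. replace (- t * - t) with (t * t) by ring. ring. Qed.

Lemma p_mid_mono t u : -1 <= t -> t <= u -> u <= 1 -> p t <= p u.
Proof.
  intros H0 H1 H2.
  destruct (Rle_lt_dec 0 t).
  - apply p_mid; lra.
  - destruct (Rle_lt_dec u 0).
    + pose proof (p_mid (-u) (-t) ltac:(lra) ltac:(lra) ltac:(lra)).
      rewrite !p_odd in H. lra.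
    + unfold p. pose proof (exp_pos (- (t * t) / 2)). pose proof (exp_pos (- (u * u) / 2)). nra.
Qed.

Lemma q_mono t u : t <= u -> q t <= q u.
Proof.
  intros H. unfold q. apply p_mid_mono;
  repeat (apply Rmax_case_strong || apply Rmin_case_strong); intros; lra.
Qed.

Lemma pq_mono t u : t <= u -> p u - q u <= p t - q t.
Proof.
  intros H. unfold q.
  assert (Hl : forall x, x <= -1 -> 0 <= p x - p (-1)).
  { intros x Hx. pose proof (p_right 1 (-x) ltac:(lra) ltac:(lra)). rewrite p_odd in H0.
    replace (-1) with (- (1)) by ring. rewrite p_odd. lra. }
  assert (Hr : forall x, 1 <= x -> p x - p 1 <= 0).
  { intros x Hx. pose proof (p_right 1 x ltac:(lra) Hx). lra. }
  destruct (Rle_lt_dec u (-1)).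
  - rewrite (Rmin_left u 1), (Rmin_left t 1), !Rmax_left by lra.
    pose proof (p_right (-u) (-t) ltac:(lra) ltac:(lra)). rewrite !p_odd in H0. lra.
  - destruct (Rle_lt_dec u 1).
    + rewrite (Rmin_left u 1) by lra. rewrite (Rmax_right _ u) by lra.
      destruct (Rle_lt_dec t (-1)).
      * rewrite (Rmin_left t 1), Rmax_left by lra. specialize (Hl t ltac:(lra)). lra.
      * rewrite (Rmin_left t 1), (Rmax_right _ t) by lra. lra.
    + rewrite (Rmin_right u 1), (Rmax_right _ 1) by lra.
      specialize (Hr u ltac:(lra)).
      destruct (Rle_lt_dec t (-1)).
      * rewrite (Rmin_left t 1), Rmax_left by lra. specialize (Hl t ltac:(lra)). lra.
      * destruct (Rle_lt_dec t 1).
        -- rewrite (Rmin_left t 1), (Rmax_right _ t) by lra. lra.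
        -- rewrite (Rmin_right t 1), (Rmax_right _ 1) by lra.
           pose proof (p_right t u ltac:(lra) H). lra.
Qed.

Lemma p_bound t : Rabs (p t) <= exp (- / 2).
Proof.
  unfold p. rewrite Rabs_mult, (Rabs_right (exp _)) by (left; apply exp_pos).
  set (d := (t * t - 1) / 2).
  replace (- (t * t) / 2) with (- / 2 + - d) by (unfold d; field).
  rewrite exp_plus.
  assert (exp d * exp (-d) = 1) by (rewrite <- exp_plus; replace (d + - d) with 0 by ring; apply exp_0).
  pose proof (exp_ineq1_le d). pose proof (exp_pos (-d)). pose proof (exp_pos (- / 2)).
  assert (Rabs t <= 1 + d).
  { unfold d. pose proof (Rsqr_abs t). unfold Rsqr in H3. pose proof (Rabs_pos t). pose proof (Rle_0_sqr (Rabs t - 1)). unfold Rsqr in *. nra. }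
  assert (Rabs t * exp (- d) <= 1) by nra.
  nra.
Qed.

Lemma q_bound t : Rabs (q t) <= exp (- / 2).
Proof. apply p_bound. Qed.


Definition phi (a x : R) : R := exp (- (a * (x * x)) / 2).
Definition psi (a x : R) : R := - sqrt a * q (sqrt a * x).

Lemma phi_is_derive (a x : R) : is_derive (phi a) x (-(a*x) * phi a x).
Proof. unfold phi. auto_derive; auto. unfold Rdiv. field. Qed.

Lemma phi_deriv a x : derivable_pt_lim (phi a) x (-(a*x) * phi a x).
Proof. apply is_derive_Reals, phi_is_derive. Qed.

Lemma phi_ex a u v : ex_RInt (phi a) u v.
Proof.
  apply (@ex_RInt_continuous R_CompleteNormedModule). intros z _. apply (@ex_derive_continuous R_AbsRing R_NormedModule).
  eexists. apply phi_is_derive.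
Qed.

Lemma dphi_eq a x : 0 < a -> -(a*x) * phi a x = - sqrt a * p (sqrt a * x).
Proof.
  intros Ha. unfold p, phi. pose proof (sqrt_sqrt a ltac:(lra)).
  replace (sqrt a * x * (sqrt a * x)) with (sqrt a * sqrt a * (x * x)) by ring. rewrite H.
  replace (- sqrt a * (sqrt a * x * exp (- (a * (x * x)) / 2))) with
    (- (sqrt a * sqrt a) * x * exp (- (a * (x * x)) / 2)) by ring.
  rewrite H. ring.
Qed.

Lemma affine_RInt al be c u v :
  is_RInt (fun x => al + be * (x - c)) u v
    (al * (v - u) + be * ((v - c) * (v - c) - (u - c) * (u - c)) / 2).
Proof.
  replace (al * (v - u) + be * ((v - c) * (v - c) - (u - c) * (u - c)) / 2) with
    (minus ((fun x => al * x + be * ((x - c) * (x - c)) / 2) v)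
           ((fun x => al * x + be * ((x - c) * (x - c)) / 2) u)).
  2:{ unfold minus, plus, opp; simpl. field. }
  apply (@is_RInt_derive R_CompleteNormedModule (fun x => al * x + be * ((x - c) * (x - c)) / 2)).
  - intros x _. auto_derive; auto. field.
  - intros x _. apply (@ex_derive_continuous R_AbsRing R_NormedModule). auto_derive. auto.
Qed.

Lemma cell a c h : 0 < a -> 0 < h ->
  h * phi a c <= RInt (phi a) (c - h/2) (c + h/2)
                 + h * h / 8 * (psi a (c - h/2) - psi a (c + h/2)).
Proof.
  intros Ha Hh.
  set (l := c - h/2). set (r := c + h/2).
  set (sa := sqrt a). assert (Hsa : 0 < sa) by (apply sqrt_lt_R0; lra).
  set (D1 := psi a l - psi a c). set (D2 := psi a c - psi a r).
  set (f1 := -(a*c) * phi a c).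
  assert (C1 : forall x, l <= x <= c -> phi a c + (f1 + D1) * (x - c) <= phi a x).
  { intros x Hx. destruct (Req_dec x c) as [->|Hne].
    { replace (c - c) with 0 by ring. lra. }
    destruct (MVT_cor2 (phi a) (fun y => -(a*y) * phi a y) x c ltac:(lra)) as [xi [Hxi1 Hxi2]].
    { intros; apply phi_deriv. }
    assert (Hd : -(a*xi) * phi a xi <= f1 + D1).
    { unfold f1, D1, psi. rewrite !dphi_eq by lra. fold sa.
      pose proof (pq_mono (sa * xi) (sa * c) ltac:(nra)).
      pose proof (q_mono (sa * l) (sa * xi) ltac:(nra)).
      nra. }
    nra. }
  assert (C2 : forall x, c <= x <= r -> phi a c + (f1 - D2) * (x - c) <= phi a x).
  { intros x Hx. destruct (Req_dec x c) as [->|Hne].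
    { replace (c - c) with 0 by ring. lra. }
    destruct (MVT_cor2 (phi a) (fun y => -(a*y) * phi a y) c x ltac:(lra)) as [xi [Hxi1 Hxi2]].
    { intros; apply phi_deriv. }
    assert (Hd : f1 - D2 <= -(a*xi) * phi a xi).
    { unfold f1, D2, psi. rewrite !dphi_eq by lra. fold sa.
      pose proof (pq_mono (sa * c) (sa * xi) ltac:(nra)).
      pose proof (q_mono (sa * xi) (sa * r) ltac:(nra)).
      nra. }
    nra. }
  pose proof (affine_RInt (phi a c) (f1 + D1) c l c) as I1.
  pose proof (affine_RInt (phi a c) (f1 - D2) c c r) as I2.
  assert (L1 : RInt (fun x => phi a c + (f1 + D1) * (x - c)) l c <= RInt (phi a) l c).
  { apply RInt_le; [unfold l; lra | eexists; exact I1 | apply phi_ex |].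
    intros x Hx; apply C1; lra. }
  assert (L2 : RInt (fun x => phi a c + (f1 - D2) * (x - c)) c r <= RInt (phi a) c r).
  { apply RInt_le; [unfold r; lra | eexists; exact I2 | apply phi_ex |].
    intros x Hx; apply C2; lra. }
  apply (@is_RInt_unique R_CompleteNormedModule) in I1. apply (@is_RInt_unique R_CompleteNormedModule) in I2.
  rewrite I1 in L1. rewrite I2 in L2.
  rewrite <- (RInt_Chasles (phi a) l c r) by apply phi_ex.
  unfold plus; simpl.
  unfold l, r in *.
  replace (h * h / 8 * (psi a (c - h / 2) - psi a (c + h / 2))) with (h * h / 8 * (D1 + D2))
    by (unfold D1, D2, l, r; ring).
  nra.
Qed.


Lemma sum_cells a x0 h n : 0 < a -> 0 < h ->
  h * sum_f_R0 (fun k => phi a (x0 + INR k * h)) n <=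
  RInt (phi a) (x0 - h/2) (x0 + INR n * h + h/2)
  + h * h / 8 * (psi a (x0 - h/2) - psi a (x0 + INR n * h + h/2)).
Proof.
  intros Ha Hh. induction n as [|n IH].
  - simpl sum_f_R0. simpl INR. replace (x0 + 0 * h) with x0 by ring.
    replace (x0 + 0 * h + h / 2) with (x0 + h/2) by ring. apply cell; auto.
  - cbn [sum_f_R0]. rewrite S_INR.
    pose proof (cell a (x0 + (INR n + 1) * h) h Ha Hh) as Hc.
    replace (x0 + (INR n + 1) * h - h / 2) with (x0 + INR n * h + h/2) in Hc by field.
    replace (x0 + (INR n + 1) * h + h / 2) with (x0 + (INR n + 1) * h + h/2) in Hc by ring.
    rewrite <- (RInt_Chasles (phi a) (x0 - h/2) (x0 + INR n * h + h/2)) by apply phi_ex.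
    unfold plus; simpl. lra.
Qed.

Lemma phi_pos a x : 0 < phi a x.
Proof. apply exp_pos. Qed.

Lemma lower_bound a J : 0 < a -> is_integral_R (phi a) J -> 4/3 * sqrt (2/a) <= J.
Proof.
  intros Ha HJ. set (s := sqrt (2/a)).
  assert (Hs : 0 < s) by (apply sqrt_lt_R0; apply Rdiv_lt_0_compat; lra).
  assert (Hs2 : s * s = 2 / a) by (apply sqrt_sqrt; left; apply Rdiv_lt_0_compat; lra).
  assert (Hint : is_RInt (fun x => 1 + (- (a/2) * x) * (x - 0)) (-s) s (4/3 * s)).
  { pose proof (@is_RInt_derive R_CompleteNormedModule (fun x => x - a * (x*x*x) / 6)
      (fun x => 1 + (- (a/2) * x) * (x - 0)) (-s) s) as H.
    replace (4/3 * s) with (minus ((fun x => x - a * (x*x*x) / 6) s) ((fun x => x - a * (x*x*x) / 6) (-s))).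
    2:{ unfold minus, plus, opp; simpl. replace (a * (s*s*s)) with (a * (s * s) * s) by ring.
        replace (a * (- s * - s * - s)) with (- (a * (s * s) * s)) by ring.
        rewrite Hs2. field. lra. }
    apply H.
    - intros x _. auto_derive; auto. unfold Rdiv. field.
    - intros x _. apply (@ex_derive_continuous R_AbsRing R_NormedModule). auto_derive. auto. }
  assert (RInt (fun x => 1 + (- (a/2) * x) * (x - 0)) (-s) s <= RInt (phi a) (-s) s).
  { apply RInt_le; [lra | eexists; exact Hint | apply phi_ex |].
    intros x _. unfold phi. pose proof (exp_ineq1_le (- (a * (x * x)) / 2)).
    replace (1 + - (a / 2) * x * (x - 0)) with (1 + - (a * (x * x)) / 2) by field. lra. }
  apply (@is_RInt_unique R_CompleteNormedModule) in Hint. rewrite Hint in H.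
  pose proof (int_bound (phi a) J (-s) s (fun x => Rlt_le _ _ (phi_pos a x)) HJ ltac:(lra)).
  lra.
Qed.

Lemma psi_bound a x : 0 < a -> Rabs (psi a x) <= sqrt a * exp (- / 2).
Proof.
  intros Ha. unfold psi. rewrite Rabs_mult, Rabs_Ropp, Rabs_right.
  - apply Rmult_le_compat_l; [apply sqrt_pos | apply q_bound].
  - apply Rle_ge, sqrt_pos.
Qed.

Lemma eta_bound : 3 / (4 * sqrt 2 * exp (/ 2)) <= eta.
Proof.
  unfold eta.
  assert (He : sqrt (exp 1) = exp (/2)).
  { apply sqrt_lem_1; try (left; apply exp_pos). rewrite <- exp_plus. f_equal; field. }
  assert (H8 : sqrt (8 * PI) <= 4 * sqrt 2).
  { replace (4 * sqrt 2) with (sqrt (16 * 2)).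
    - apply sqrt_le_1_alt. pose proof PI_4. lra.
    - rewrite sqrt_mult by lra. f_equal. apply sqrt_lem_1; lra. }
  rewrite sqrt_mult by (try (left; apply exp_pos); pose proof PI_RGT_0; lra).
  rewrite He.
  assert (0 < sqrt (8 * PI)) by (apply sqrt_lt_R0; pose proof PI_RGT_0; lra).
  pose proof (exp_pos (/2)).
  apply Rmult_le_compat_l; [lra|]. apply Rinv_le_contravar.
  - apply Rmult_lt_0_compat; auto.
  - apply Rmult_le_compat_r; lra.
Qed.


Lemma core a mu J (n : nat) : 0 < a -> (1 <= n)%nat ->
  is_integral_R (fun x => phi a (x - mu)) J ->
  mesh n * sum_f_R0 (fun k => phi a (grid n k - mu)) n <= (1 + eta * a / INR n) * J.
Proof.
  intros Ha Hn HJ.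
  assert (HJ0 : is_integral_R (phi a) J).
  { pose proof (int_shift _ _ mu HJ) as H. cbv beta in H.
    replace (fun x => phi a (x + mu - mu)) with (phi a) in H; [exact H|].
    apply functional_extensionality; intro x. f_equal; ring. }
  assert (HnR : 1 <= INR n) by (apply (le_INR 1); lia).
  set (sn := sqrt (INR n)).
  assert (Hsn : 0 < sn) by (apply sqrt_lt_R0; lra).
  assert (Hsn2 : sn * sn = INR n) by (apply sqrt_sqrt; lra).
  set (h := mesh n). assert (Hh : h = 2 / sn) by reflexivity.
  assert (Hhp : 0 < h) by (rewrite Hh; apply Rdiv_lt_0_compat; lra).
  set (x0 := - sn - mu).
  assert (Hg : forall k, grid n k - mu = x0 + INR k * h).
  { intro k. unfold grid, x0. fold sn. rewrite Hh. field. lra. }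
  replace (fun k => phi a (grid n k - mu)) with (fun k => phi a (x0 + INR k * h))
    by (apply functional_extensionality; intro k; now rewrite Hg).
  pose proof (sum_cells a x0 h n Ha Hhp) as HS.
  pose proof (int_bound (phi a) J (x0 - h/2) (x0 + INR n * h + h/2)
     (fun x => Rlt_le _ _ (phi_pos a x)) HJ0) as HB.
  assert (x0 - h/2 <= x0 + INR n * h + h/2) by nra.
  specialize (HB H).
  pose proof (psi_bound a (x0 - h/2) Ha) as P1.
  pose proof (psi_bound a (x0 + INR n * h + h / 2) Ha) as P2.
  apply Rabs_le_between in P1. apply Rabs_le_between in P2.
  set (sa := sqrt a) in *. set (E := exp (- / 2)) in *.
  assert (Hhh : h * h = 4 / INR n) by (rewrite Hh, <- Hsn2; field; lra).
  assert (HS2 : h * sum_f_R0 (fun k => phi a (x0 + INR k * h)) n <= J + sa * E / INR n).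
  { assert (h * h / 8 * (psi a (x0 - h / 2) - psi a (x0 + INR n * h + h / 2)) <= h * h / 8 * (2 * sa * E)).
    { apply Rmult_le_compat_l; [nra | lra]. }
    replace (h * h / 8 * (2 * sa * E)) with (sa * E / INR n) in H0 by (unfold Rdiv at 1; rewrite Hhh; field; lra).
    lra. }
  pose proof (lower_bound a J Ha HJ0) as LB.
  pose proof eta_bound as EB.
  assert (Hsa : 0 < sa) by (apply sqrt_lt_R0; lra).
  assert (Hsa2 : sa * sa = a) by (apply sqrt_sqrt; lra).
  assert (Hs2a : sqrt (2 / a) = sqrt 2 / sa) by (apply sqrt_div; lra).
  rewrite Hs2a in LB.
  set (s2 := sqrt 2) in *. assert (0 < s2) by (apply sqrt_lt_R0; lra).
  set (Eh := exp (/2)) in *. assert (0 < Eh) by apply exp_pos.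
  assert (HE : E * Eh = 1) by (unfold E, Eh; rewrite <- exp_plus; replace (- / 2 + / 2) with 0 by field; apply exp_0).
  assert (Key : sa * E <= eta * a * J).
  { assert (0 < J) by (eapply Rlt_le_trans; [|exact LB]; apply Rmult_lt_0_compat; [lra|apply Rdiv_lt_0_compat; lra]).
    assert (eta * a * J >= 3 / (4 * s2 * Eh) * a * (4 / 3 * (s2 / sa))).
    { apply Rle_ge. apply Rmult_le_compat; try nra.
      - apply Rmult_le_pos; [|lra]. left; apply Rdiv_lt_0_compat; [lra|]. apply Rmult_lt_0_compat; nra.
      - left. apply Rmult_lt_0_compat; [lra|apply Rdiv_lt_0_compat; lra]. }
    replace (3 / (4 * s2 * Eh) * a * (4 / 3 * (s2 / sa))) with (sa * E) in H3.
    - lra.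
    - rewrite <- Hsa2. field_simplify_eq; [|repeat split; lra]. 
      rewrite Rmult_assoc, HE. ring. }
  assert (sa * E / INR n <= eta * a / INR n * J).
  { replace (eta * a / INR n * J) with (eta * a * J / INR n) by (field; lra).
    apply Rmult_le_compat_r; [left; apply Rinv_0_lt_compat; lra | lra]. }
  fold h. nra.
Qed.


Lemma int_unique f l1 l2 : is_integral_R f l1 -> is_integral_R f l2 -> l1 = l2.
Proof.
  intros H1 H2. apply Rle_antisym; eapply int_le; eauto; intros; lra.
Qed.

Lemma helper a Ev mu F l : 0 < Ev -> (forall x, F x = Ev * phi a (x - mu)) ->
  is_integral_R F l -> is_integral_R (fun x => phi a (x - mu)) (/ Ev * l).
Proof.
  intros HE HF Hl. pose proof (int_scal F l (/ Ev) Hl) as H.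
  replace (fun x => / Ev * F x) with (fun x => phi a (x - mu)) in H; [exact H|].
  apply functional_extensionality; intro x. rewrite HF. field. lra.
Qed.

Lemma helper0 a Ev mu F l : 0 < Ev -> (forall x, F x = Ev * phi a (x - mu)) ->
  is_integral_R F l -> is_integral_R (phi a) (/ Ev * l).
Proof.
  intros HE HF Hl. pose proof (int_shift _ _ mu (helper a Ev mu F l HE HF Hl)) as H.
  cbv beta in H.
  replace (fun x => phi a (x + mu - mu)) with (phi a) in H; [exact H|].
  apply functional_extensionality; intro x. f_equal; ring.
Qed.

Lemma pos_l a Ev mu F l : 0 < a -> 0 < Ev -> (forall x, F x = Ev * phi a (x - mu)) ->
  is_integral_R F l -> 0 < l.
Proof.
  intros Ha HE HF Hl. pose proof (lower_bound a _ Ha (helper0 a Ev mu F l HE HF Hl)) as H.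
  assert (0 < 4/3 * sqrt (2/a)) by (apply Rmult_lt_0_compat; [lra|apply sqrt_lt_R0; apply Rdiv_lt_0_compat; lra]).
  assert (0 < / Ev * l) by lra.
  replace l with (Ev * (/ Ev * l)) by (field; lra). apply Rmult_lt_0_compat; lra.
Qed.

Lemma step1D (n : nat) a Ev mu F l : (1 <= n)%nat -> 0 < a -> 0 < Ev ->
  (forall x, F x = Ev * phi a (x - mu)) -> is_integral_R F l ->
  mesh n * sum_f_R0 (fun k => F (grid n k)) n <= (1 + eta * a / INR n) * l.
Proof.
  intros Hn Ha HE HF Hl.
  pose proof (core a mu (/ Ev * l) n Ha Hn (helper a Ev mu F l HE HF Hl)) as H.
  assert (HH : sum_f_R0 (fun k => F (grid n k)) n = sum_f_R0 (fun k => phi a (grid n k - mu) * Ev) n).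
  { apply sum_eq. intros k _. rewrite HF. ring. }
  rewrite HH, <- scal_sum.
  assert (HnR : 1 <= INR n) by (apply (le_INR 1); lia).
  replace ((1 + eta * a / INR n) * l) with (Ev * ((1 + eta * a / INR n) * (/ Ev * l))) by (field; split; lra).
  replace (mesh n * (Ev * sum_f_R0 (fun k : nat => phi a (grid n k - mu)) n))
    with (Ev * (mesh n * sum_f_R0 (fun k : nat => phi a (grid n k - mu)) n)) by ring.
  apply Rmult_le_compat_l; lra.
Qed.

Lemma sum_swap (G : nat -> nat -> R) n m :
  sum_f_R0 (fun k => sum_f_R0 (fun k' => G k k') m) n =
  sum_f_R0 (fun k' => sum_f_R0 (fun k => G k k') n) m.
Proof.
  induction n as [|n IH]; simpl.
  - reflexivity.
  - rewrite IH. rewrite <- sum_plus. reflexivity.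
Qed.

Lemma mesh_pos n : (1 <= n)%nat -> 0 < mesh n.
Proof.
  intros Hn. unfold mesh. apply Rdiv_lt_0_compat; [lra|]. apply sqrt_lt_R0.
  pose proof (le_INR 1 n ltac:(lia)). simpl in H. lra.
Qed.

Lemma eta_pos : 0 < eta.
Proof.
  unfold eta. apply Rdiv_lt_0_compat; [lra|]. apply sqrt_lt_R0.
  pose proof PI_RGT_0. pose proof (exp_pos 1). nra.
Qed.


Theorem mainTheorem16 :
  (* (a) *)
  (forall (n : nat) (B : nat -> nat -> R) (Id Ic : R) (g : R -> R),
     (1 <= n)%nat -> posdef2 B ->
     is_integral_R (fun x2 => mesh n *
        sum_f_R0 (fun k => gauss2 B (grid n k) x2) n) Id ->
     (forall x2, is_integral_R (fun x1 => gauss2 B x1 x2) (g x2)) ->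
     is_integral_R g Ic ->
     Id <= (1 + eta * B 1%nat 1%nat / INR n) * Ic)
  /\
  (* (b) *)
  (forall (n n' : nat) (B : nat -> nat -> R) (Id Ic : R)
          (g2 : R -> R -> R) (g1 : R -> R),
     (1 <= n)%nat -> (1 <= n')%nat -> posdef3 B ->
     is_integral_R (fun x3 => mesh n * mesh n' *
        sum_f_R0 (fun k => sum_f_R0 (fun k' =>
           gauss3 B (grid n k) (grid n' k') x3) n') n) Id ->
     (forall x2 x3, is_integral_R (fun x1 => gauss3 B x1 x2 x3) (g2 x2 x3)) ->
     (forall x3, is_integral_R (fun x2 => g2 x2 x3) (g1 x3)) ->
     is_integral_R g1 Ic ->
     Id <= (1 + eta * B 1%nat 1%nat / INR n)
           * (1 + eta * B 2%nat 2%nat / INR n') * Ic).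
Proof.
  split.
  - intros n B Id Ic g Hn [Hsym Hpd] HId Hg HIc.
    set (a := B 1%nat 1%nat). set (b := B 1%nat 2%nat). set (d := B 2%nat 2%nat).
    assert (Ha : 0 < a).
    { pose proof (Hpd 1 0 ltac:(left; lra)) as H. unfold qform2 in H. fold a in H. nra. }
    set (C := 1 + eta * a / INR n).
    assert (Hpt : forall x2, mesh n * sum_f_R0 (fun k => gauss2 B (grid n k) x2) n <= C * g x2).
    { intro x2.
      apply (step1D n a (exp (- ((d - b * b / a) * (x2 * x2)) / 2)) (- (b * x2) / a)
               (fun x1 => gauss2 B x1 x2)); auto; [apply exp_pos|].
      intro x. unfold gauss2, phi. rewrite <- exp_plus. f_equal. unfold qform2.
      rewrite <- Hsym. fold a b d. field. lra. }
    pose proof (int_scal g Ic C HIc) as HC.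
    eapply int_le; [|exact HId|exact HC]. exact Hpt.
  - intros n n' B Id Ic g2 g1 Hn Hn' [Hsym Hpd] HId Hg2 Hg1 HIc.
    assert (S21 : B 2%nat 1%nat = B 1%nat 2%nat) by (apply Hsym; lia).
    assert (S31 : B 3%nat 1%nat = B 1%nat 3%nat) by (apply Hsym; lia).
    assert (S32 : B 3%nat 2%nat = B 2%nat 3%nat) by (apply Hsym; lia).
    assert (Hq : forall x1 x2 x3, qform3 B x1 x2 x3 =
      B 1%nat 1%nat * (x1 * x1) + 2 * B 1%nat 2%nat * x1 * x2 + 2 * B 1%nat 3%nat * x1 * x3
      + B 2%nat 2%nat * (x2 * x2) + 2 * B 2%nat 3%nat * x2 * x3 + B 3%nat 3%nat * (x3 * x3)).
    { intros. unfold qform3. simpl. rewrite S21, S31, S32. ring. }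
    set (a := B 1%nat 1%nat) in *. set (b := B 1%nat 2%nat) in *. set (c := B 1%nat 3%nat) in *.
    set (d := B 2%nat 2%nat) in *. set (e := B 2%nat 3%nat) in *. set (f := B 3%nat 3%nat) in *.
    assert (Ha : 0 < a).
    { pose proof (Hpd 1 0 0 ltac:(left; lra)) as H. rewrite Hq in H. nra. }
    set (d' := d - b * b / a). set (e' := e - b * c / a). set (f' := f - c * c / a).
    assert (Hd' : 0 < d').
    { pose proof (Hpd (- b / a) 1 0 ltac:(right; left; lra)) as H. rewrite Hq in H.
      unfold d'. replace (d - b * b / a) with
        (a * (- b / a * (- b / a)) + 2 * b * (- b / a) * 1 + 2 * c * (- b / a) * 0 +
         d * (1 * 1) + 2 * e * 1 * 0 + f * (0 * 0)) by (field; lra). exact H. }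
    set (Q2 := fun x2 x3 => d' * (x2 * x2) + 2 * e' * x2 * x3 + f' * (x3 * x3)).
    set (mu := fun x2 x3 => - (b * x2 + c * x3) / a).
    assert (HF1 : forall x2 x3 x, gauss3 B x x2 x3 = exp (- Q2 x2 x3 / 2) * phi a (x - mu x2 x3)).
    { intros. unfold gauss3, phi, Q2, mu. rewrite <- exp_plus. f_equal. rewrite Hq.
      unfold d', e', f'. field. lra. }
    set (C1 := 1 + eta * a / INR n).
    assert (Hin : forall x2 x3, mesh n * sum_f_R0 (fun k => gauss3 B (grid n k) x2 x3) n <= C1 * g2 x2 x3).
    { intros x2 x3. apply (step1D n a (exp (- Q2 x2 x3 / 2)) (mu x2 x3) (fun x1 => gauss3 B x1 x2 x3));
        auto; try apply exp_pos; try (intro; apply HF1). }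
    set (K := / exp (- Q2 0 0 / 2) * g2 0 0).
    assert (HK : forall x2 x3, g2 x2 x3 = exp (- Q2 x2 x3 / 2) * K).
    { intros x2 x3.
      pose proof (helper0 a _ (mu x2 x3) _ _ (exp_pos (- Q2 x2 x3 / 2)) (HF1 x2 x3) (Hg2 x2 x3)) as H1.
      pose proof (helper0 a _ (mu 0 0) _ _ (exp_pos (- Q2 0 0 / 2)) (HF1 0 0) (Hg2 0 0)) as H0.
      pose proof (int_unique _ _ _ H1 H0) as U. fold K in U. rewrite <- U.
      pose proof (exp_pos (- Q2 x2 x3 / 2)). field. lra. }
    assert (HKp : 0 < K).
    { pose proof (lower_bound a K Ha (helper0 a _ (mu 0 0) _ _ (exp_pos (- Q2 0 0 / 2)) (HF1 0 0) (Hg2 0 0))).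
      assert (0 < 4/3 * sqrt (2/a)) by (apply Rmult_lt_0_compat; [lra|apply sqrt_lt_R0; apply Rdiv_lt_0_compat; lra]).
      lra. }
    set (C2 := 1 + eta * d / INR n').
    assert (HC1 : 0 <= C1).
    { unfold C1. pose proof eta_pos. assert (1 <= INR n) by (apply (le_INR 1); lia).
      assert (0 <= eta * a / INR n) by (apply Rdiv_le_0_compat; nra). lra. }
    assert (Hpt : forall x3, mesh n * mesh n' * sum_f_R0 (fun k => sum_f_R0 (fun k' =>
           gauss3 B (grid n k) (grid n' k') x3) n') n <= C1 * C2 * g1 x3).
    { intro x3.
      set (Ev := K * exp (- ((f' - e' * e' / d') * (x3 * x3)) / 2)).
      assert (HEv : 0 < Ev) by (apply Rmult_lt_0_compat; [lra|apply exp_pos]).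
      set (nu := - (e' * x3) / d').
      assert (HF2 : forall x, g2 x x3 = Ev * phi d' (x - nu)).
      { intro x. rewrite HK. unfold Ev, phi, nu, Q2. rewrite (Rmult_assoc K), <- exp_plus, (Rmult_comm (exp _) K).
        f_equal. f_equal. field. lra. }
      pose proof (step1D n' d' Ev nu (fun x2 => g2 x2 x3) (g1 x3) Hn' Hd' HEv HF2 (Hg1 x3)) as S2.
      pose proof (pos_l d' Ev nu (fun x2 => g2 x2 x3) (g1 x3) Hd' HEv HF2 (Hg1 x3)) as Pg1.
      assert (HC2 : 1 + eta * d' / INR n' <= C2).
      { unfold C2. pose proof eta_pos. assert (1 <= INR n') by (apply (le_INR 1); lia).
        assert (d' <= d) by (unfold d'; assert (0 <= b * b / a) by (apply Rdiv_le_0_compat; nra); lra).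
        assert (eta * d' / INR n' <= eta * d / INR n').
        { unfold Rdiv. apply Rmult_le_compat_r; [left; apply Rinv_0_lt_compat; lra|]. nra. }
        lra. }
      rewrite sum_swap.
      pose proof (mesh_pos n Hn). pose proof (mesh_pos n' Hn').
      assert (HS : mesh n * sum_f_R0 (fun k' => sum_f_R0 (fun k => gauss3 B (grid n k) (grid n' k') x3) n) n'
                   <= sum_f_R0 (fun k' => C1 * g2 (grid n' k') x3) n').
      { rewrite scal_sum. apply sum_Rle. intros k' _. rewrite Rmult_comm. apply Hin. }
      assert (HS' : sum_f_R0 (fun k' => C1 * g2 (grid n' k') x3) n' = C1 * sum_f_R0 (fun k' => g2 (grid n' k') x3) n').
      { rewrite scal_sum. apply sum_eq. intros; ring. }
      rewrite HS' in HS.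
      replace (mesh n * mesh n' * sum_f_R0 (fun k' => sum_f_R0 (fun k => gauss3 B (grid n k) (grid n' k') x3) n) n')
        with (mesh n' * (mesh n * sum_f_R0 (fun k' => sum_f_R0 (fun k => gauss3 B (grid n k) (grid n' k') x3) n) n')) by ring.
      apply Rle_trans with (mesh n' * (C1 * sum_f_R0 (fun k' => g2 (grid n' k') x3) n')).
      { apply Rmult_le_compat_l; lra. }
      replace (mesh n' * (C1 * sum_f_R0 (fun k' => g2 (grid n' k') x3) n'))
        with (C1 * (mesh n' * sum_f_R0 (fun k' => g2 (grid n' k') x3) n')) by ring.
      rewrite Rmult_assoc. apply Rmult_le_compat_l; [exact HC1|].
      apply Rle_trans with ((1 + eta * d' / INR n') * g1 x3); [exact S2|].
      apply Rmult_le_compat_r; lra. }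
    pose proof (int_scal g1 Ic (C1 * C2) HIc) as HC.
    eapply int_le; [|exact HId|exact HC]. exact Hpt.
Qed.
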